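(* Let $n\ge 1$ and let $A\in\mathcal{E}_n$ have rank $r$ (as an abelian group). Then there exists a finite set $E$ of mod-linear functions $l:\mathbb{Z}^{2n}\to\mathbb{Z}$ of order $\le r$ such that for all integers $a_1\le b_1,\dots,a_n\le b_n$ the following are equivalent: (i) there exists $(x_1,\dots,x_n)\in A$ with $a_i\le x_i\le b_i$ for all $i=1,\dots,n$; (ii) $0\le l(a_1,b_1,a_2,b_2,\dots,a_n,b_n)$ for every $l\in E$.
   Context: For $v=(v_1,\dots,v_n),w=(w_1,\dots,w_n)\in\mathbb{Z}^n$ write $v\mid w$ if $v_i$ divides $w_i$ for every $i$ with $v_i\neq 0$. For $v\in\mathbb{Q}^n$ with support $S=\{i: v_i\neq 0\}$ of size $s$, define the linear map $L_v:\mathbb{Q}^n\to\mathbb{Q}^{\binom{s}{2}+n-s}$ by $L_v(t_1,\dots,t_n)=\big((\tfrac{t_i}{v_i}-\tfrac{t_j}{v_j})_{i<j,\ i,j\in S},\ (t_k)_{k\notin S}\big)$, where the pairs $(i,j)$ are listed in lexicographic order and then the $t_k$, $k\notin S$, in increasing order of $k$. The class $\mathcal{E}_n$ of subgroups of $\mathbb{Z}^n$ is defined inductively: a nonzero subgroup $A\subseteq\mathbb{Z}^n$ belongs to $\mathcal{E}_n$ iff there is a nonzero $v\in A$ with (1) $v\mid w$ for all $w\in A$, and (2) $L_v(A)=\{0\}$ or $L_v(A)\in\mathcal{E}_{\binom{s}{2}+n-s}$ (where $s$ is the number of nonzero components of $v$; under (1), $L_v(A)\subseteq\mathbb{Z}^{\binom{s}{2}+n-s}$).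 Mod-linear functions $l:\mathbb{Z}^N\to\mathbb{Z}$ of order $\le r$ are defined inductively: those of order $\le 0$ are the coordinate projections $(x_1,\dots,x_N)\mapsto x_i$; for $r>0$, $l$ has order $\le r$ if there are mod-linear functions $l_1,l_2$ of order $\le r-1$ and nonzero integers $m_1,m_2$ with $l(x)=\lfloor l_1(x)/m_1\rfloor-\lceil l_2(x)/m_2\rceil$ for all $x\in\mathbb{Z}^N$. *)

(* Defs.v *)
(* Vectors of Z^n are represented as sequences of integers
   of size n; subsets of Z^n as predicates on seq int. *)
From HB Require Import structures.
From mathcomp Require Import all_boot all_order all_algebra.
From Stdlib Require List.
Set Implicit Arguments. Unset Strict Implicit. Unset Printing Implicit Defensive.
Import Order.TTheory GRing.Theory Num.Theory.
Local Open Scope ring_scope.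

Definition vzero (n : nat) : seq int := nseq n 0.
Definition vadd (x y : seq int) : seq int := [seq p.1 + p.2 | p <- zip x y].
Definition vopp (x : seq int) : seq int := [seq - a | a <- x].
Definition vscale (c : int) (x : seq int) : seq int := [seq c * a | a <- x].

Definition subgroup (n : nat) (A : seq int -> Prop) : Prop :=
  [/\ forall x, A x -> size x = n,
      A (vzero n),
      forall x y, A x -> A y -> A (vadd x y)
    & forall x, A x -> A (vopp x)].

Definition vdiv (v w : seq int) : Prop :=
  forall i : nat, v`_i != 0 -> (v`_i %| w`_i)%Z.

Definition supp (n : nat) (v : seq int) : seq nat := [seq i <- iota 0 n | v`_i != 0].
Definition nsupp (n : nat) (v : seq int) : seq nat := [seq i <- iota 0 n | v`_i == 0].

Definition Ldim (n : nat) (v : seq int) : nat :=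
  ('C(size (supp n v), 2) + (n - size (supp n v)))%N.

(* the linear map L_v : Q^n -> Q^(binom(s,2)+n-s), applied to integer vectors,
   with pairs (i,j), i<j in S, in lexicographic order, then t_k, k notin S *)
Definition Lv (n : nat) (v : seq int) (t : seq int) : seq rat :=
  [seq (t`_ij.1)%:~R / (v`_ij.1)%:~R - (t`_ij.2)%:~R / (v`_ij.2)%:~R
     | ij <- [seq (i, j) | i <- supp n v, j <- [seq j <- supp n v | (i < j)%N]]]
  ++ [seq (t`_k)%:~R | k <- nsupp n v].

Definition LvImage (n : nat) (v : seq int) (A : seq int -> Prop) : seq int -> Prop :=
  fun u => exists t, A t /\ [seq (a%:~R : rat) | a <- u] = Lv n v t.

Inductive classE : nat -> (seq int -> Prop) -> Prop :=
| classE_intro (n : nat) (A : seq int -> Prop) (v : seq int) :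
    subgroup n A ->
    A v -> v != vzero n ->
    (forall w, A w -> vdiv v w) ->
    ((forall u, LvImage n v A u <-> u = vzero (Ldim n v))
     \/ classE (Ldim n v) (LvImage n v A)) ->
    classE n A.

Definition lincomb (n : nat) (c : seq int) (xs : seq (seq int)) : seq int :=
  foldr vadd (vzero n) [seq vscale p.1 p.2 | p <- zip c xs].

Definition lin_indep (n : nat) (xs : seq (seq int)) : Prop :=
  forall c : seq int, size c = size xs ->
    lincomb n c xs = vzero n -> c = nseq (size c) 0.

Definition grank (n : nat) (A : seq int -> Prop) (r : nat) : Prop :=
  (exists xs : seq (seq int),
      size xs = r /\ (forall x, List.In x xs -> A x) /\ lin_indep n xs) /\
  (forall ys : seq (seq int),
      (forall y, List.In y ys -> A y) -> lin_indep n ys -> (size ys <= r)%N).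

Inductive modlin (N : nat) : nat -> (seq int -> int) -> Prop :=
| modlin_proj (i : nat) : (i < N)%N -> modlin N 0 (fun x => x`_i)
| modlin_step (r : nat) (l1 l2 : seq int -> int) (m1 m2 : int) :
    modlin N r l1 -> modlin N r l2 -> m1 != 0 -> m2 != 0 ->
    modlin N r.+1 (fun x => Num.floor ((l1 x)%:~R / (m1%:~R) : rat)
                           - Num.ceil ((l2 x)%:~R / (m2%:~R) : rat)).

Definition interleave (a b : seq int) : seq int :=
  flatten [seq [:: p.1; p.2] | p <- zip a b].

(* Main.v *)
Require Import Defs.
From HB Require Import structures.
From mathcomp Require Import all_boot all_order all_algebra.
From mathcomp Require Import ring lra zify.
From Stdlib Require List.
From Stdlib Require Import FunctionalExtensionality.
Set Implicit Arguments. Unset Strict Implicit. Unset Printing Implicit Defensive.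
Import Order.TTheory GRing.Theory Num.Theory.
Local Open Scope ring_scope.

Definition fl (z m : int) : int := Num.floor ((z%:~R / m%:~R) : rat).
Definition cl (z m : int) : int := Num.ceil ((z%:~R / m%:~R) : rat).

Inductive ML (N : nat) : nat -> (seq int -> int) -> Prop :=
| ML_proj i : (i < N)%N -> ML N 0 (fun x => x`_i)
| ML_lift r f : ML N r f -> ML N r.+1 f
| ML_step r f1 f2 m1 m2 : ML N r f1 -> ML N r f2 -> m1 != 0 -> m2 != 0 ->
    ML N r.+1 (fun x => fl (f1 x) m1 - cl (f2 x) m2).

Lemma fl_scale c z m : c != 0 -> fl (c * z) (c * m) = fl z m.
Proof.
move=> c0; rewrite /fl !intrM -mulf_div divff ?mul1r // intr_eq0 //.
Qed.

Lemma cl_scale c z m : c != 0 -> cl (c * z) (c * m) = cl z m.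
Proof.
move=> c0; rewrite /cl !intrM -mulf_div divff ?mul1r // intr_eq0 //.
Qed.

Lemma fl_opp z m : fl (- z) m = fl z (- m).
Proof. by rewrite /fl !mulrNz invrN mulrN mulNr. Qed.

Lemma cl_opp z m : cl (- z) m = cl z (- m).
Proof. by rewrite /cl !mulrNz invrN mulrN mulNr. Qed.

Lemma fl1 z : fl z 1 = z.
Proof. by rewrite /fl divr1 intrKfloor. Qed.

Lemma clN1 z : cl z (-1) = - z.
Proof. by rewrite /cl mulrNz invrN invr1 mulrN1 -mulrNz intrKceil. Qed.

Lemma modlin_ext N r f g : modlin N r f -> (forall x, f x = g x) -> modlin N r g.
Proof. by move=> H E; rewrite -(functional_extensionality f g E). Qed.

Lemma ML_ext N r f g : ML N r f -> (forall x, f x = g x) -> ML N r g.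
Proof. by move=> H E; rewrite -(functional_extensionality f g E). Qed.

Lemma ML_modlin N r f : ML N r f -> exists c : int, 0 < c /\ modlin N r (fun x => c * f x).
Proof.
elim=> {r f}.
- move=> i Hi; exists 1; split => //; apply: modlin_ext (modlin_proj Hi) _ => x.
  by rewrite mul1r.
- move=> r f _ [c [c0 Hc]]; exists (2 * c); split; first by rewrite mulr_gt0.
  have := modlin_step Hc Hc (oner_neq0 _) (isT : (-1 : int) != 0).
  move=> H; apply: modlin_ext H _ => x.
  have -> : Num.floor (((c * f x)%:~R / (1 : int)%:~R) : rat) = fl (c * f x) 1 by [].
  rewrite fl1.
  have -> : Num.ceil (((c * f x)%:~R / (-1 : int)%:~R) : rat) = cl (c * f x) (-1) by [].
  rewrite clN1; ring.
- move=> r f1 f2 m1 m2 _ [c1 [c10 H1]] _ [c2 [c20 H2]] m10 m20.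
  exists 1; split => //.
  have c1n : c1 != 0 by rewrite gt_eqF.
  have c2n : c2 != 0 by rewrite gt_eqF.
  have := modlin_step H1 H2 (mulf_neq0 c1n m10) (mulf_neq0 c2n m20).
  move=> H; apply: modlin_ext H _ => x.
  have -> : forall a b, Num.floor (((a : int)%:~R / (b : int)%:~R) : rat) = fl a b by [].
  have -> : forall a b, Num.ceil (((a : int)%:~R / (b : int)%:~R) : rat) = cl a b by [].
  by rewrite fl_scale // cl_scale // mul1r.
Qed.

Definition SML N r (f : seq int -> int) := ML N r f \/ ML N r (fun x => - f x).

Lemma SML_ML N r f : ML N r f -> SML N r f.
Proof. by left. Qed.

Lemma SML_opp N r f : SML N r f -> SML N r (fun x => - f x).
Proof.
case=> H; [right|left] => //; apply: ML_ext H _ => x; by rewrite opprK.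
Qed.

Lemma ML_mono N k k' f : (k <= k')%N -> ML N k f -> ML N k' f.
Proof.
move=> /subnK <-; elim: (k' - k)%N => [|d IH] H //=.
by rewrite addSn; apply: ML_lift; apply: IH.
Qed.

Lemma ML_stepS N r f1 f2 m1 m2 : SML N r f1 -> SML N r f2 -> m1 != 0 -> m2 != 0 ->
    ML N r.+1 (fun x => fl (f1 x) m1 - cl (f2 x) m2).
Proof.
move=> H1 H2 m10 m20.
have [g1 [n1 [Hg1 [n10 E1]]]] : exists g1 n1, ML N r g1 /\ n1 != 0 /\
   forall x, fl (f1 x) m1 = fl (g1 x) n1.
  case: H1 => H1; first by exists f1, m1.
  exists (fun x => - f1 x), (- m1); split => //; split; first by rewrite oppr_eq0.
  by move=> x; rewrite fl_opp opprK.
have [g2 [n2 [Hg2 [n20 E2]]]] : exists g2 n2, ML N r g2 /\ n2 != 0 /\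
   forall x, cl (f2 x) m2 = cl (g2 x) n2.
  case: H2 => H2; first by exists f2, m2.
  exists (fun x => - f2 x), (- m2); split => //; split; first by rewrite oppr_eq0.
  by move=> x; rewrite cl_opp opprK.
apply: ML_ext (ML_step Hg1 Hg2 n10 n20) _ => x; by rewrite E1 E2.
Qed.

Lemma sign_trick z : (0 <= fl z 1 - cl z 2) = (0 <= z).
Proof.
rewrite fl1 subr_ge0 /cl ceil_le_int ler_pdivrMr ?ltr0n //.
rewrite -[z%:~R *2%:~R]/(z%:~R * (2 : int)%:~R : rat) -intrM ler_int.
apply/idP/idP; lia.
Qed.

Lemma SML_sign N j f : SML N j f ->
  exists g, ML N j.+1 g /\ forall x, (0 <= g x) = (0 <= f x).
Proof.
move=> H; exists (fun x => fl (f x) 1 - cl (f x) 2); split.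
  by apply: ML_stepS.
by move=> x; rewrite sign_trick.
Qed.

Definition lo_of (a b v : int) : int := cl (if 0 < v then a else b) v.
Definition hi_of (a b v : int) : int := fl (if 0 < v then b else a) v.

Lemma bnd_char (a b v q : int) : v != 0 ->
  (a <= q * v <= b) = (lo_of a b v <= q <= hi_of a b v).
Proof.
move=> v0; rewrite /lo_of /hi_of /cl /fl.
case: (ltrgtP 0 v) => [vp|vn|]; last by move=> e; rewrite -e eqxx in v0.
- rewrite ceil_le_int floor_ge_int ler_pdivrMr ?ltr0z // ler_pdivlMr ?ltr0z //.
  by rewrite -!intrM !ler_int.
- rewrite ceil_le_int floor_ge_int ler_ndivrMr ?ltr0z // ?ltrz0 //.
  rewrite ler_ndivlMr ?ltrz0 // -!intrM !ler_int andbC //.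
Qed.

Lemma InP (T : eqType) (x : T) s : List.In x s <-> x \in s.
Proof.
elim: s => [|y s IH] //=; rewrite in_cons; split.
  by case=> [->|/IH ->]; rewrite ?eqxx ?orbT.
by case/orP => [/eqP ->|/IH]; [left|right].
Qed.

Lemma size_vadd x y : size (vadd x y) = minn (size x) (size y).
Proof. by rewrite /vadd size_map size_zip. Qed.

Lemma nth_vadd x y i : size x = size y -> (vadd x y)`_i = x`_i + y`_i.
Proof.
move=> sxy; case: (ltnP i (size x)) => hi.
  by rewrite /vadd (nth_map (0, 0)) ?size_zip ?sxy ?minnn -?sxy // nth_zip.
by rewrite !nth_default ?size_vadd -?sxy ?minnn // addr0.
Qed.

Lemma size_vscale c x : size (vscale c x) = size x.
Proof. by rewrite size_map. Qed.

Lemma nth_vscale c x i : (vscale c x)`_i = c * x`_i.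
Proof.
case: (ltnP i (size x)) => hi; first by rewrite (nth_map 0).
by rewrite !nth_default ?size_vscale // mulr0.
Qed.

Lemma nth_vopp x i : (vopp x)`_i = - x`_i.
Proof.
case: (ltnP i (size x)) => hi; first by rewrite (nth_map 0).
by rewrite !nth_default ?size_map // oppr0.
Qed.

Lemma nth_vzero n i : (vzero n)`_i = 0.
Proof. by rewrite nth_nseq if_same. Qed.

Lemma size_vzero n : size (vzero n) = n.
Proof. by rewrite size_nseq. Qed.

Lemma A_scale n A x : subgroup n A -> A x -> forall c, A (vscale c x).
Proof.
case=> Hs H0 Hadd Hopp Ax.
have sx := Hs _ Ax.
have pos : forall k : nat, A (vscale k x).
  elim=> [|k IH].
    suff -> : vscale 0 x = vzero n by [].
    apply: (@eq_from_nth _ 0); first by rewrite size_vscale size_vzero.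
    by move=> i _; rewrite nth_vscale nth_vzero mul0r.
  suff -> : vscale k.+1 x = vadd x (vscale k x) by apply: Hadd.
  apply: (@eq_from_nth _ 0); first by rewrite size_vadd !size_map minnn.
  move=> i _; rewrite nth_vadd ?size_vscale // !nth_vscale intS mulrDl mul1r //.
case=> k; first exact: pos.
suff -> : vscale (Negz k) x = vopp (vscale k.+1 x) by apply: Hopp.
apply: (@eq_from_nth _ 0); first by rewrite !size_map.
by move=> i _; rewrite nth_vopp !nth_vscale NegzE mulNr.
Qed.

Lemma lincomb_size n c xs : size c = size xs -> (forall x, x \in xs -> size x = n) ->
  size (lincomb n c xs) = n.
Proof.
elim: xs c => [|x xs IH] [|c0 c] //=; first by rewrite size_vzero.
move=> [sc] Hs; rewrite /lincomb /= size_vadd size_vscale.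
rewrite -/(lincomb n c xs) IH // ?Hs ?mem_head ?minnn // => y yxs.
by apply: Hs; rewrite in_cons yxs orbT.
Qed.

Lemma lincomb_nth n c xs i : size c = size xs -> (forall x, x \in xs -> size x = n) ->
  (lincomb n c xs)`_i = \sum_(m < size xs) c`_m * (nth [::] xs m)`_i.
Proof.
elim: xs c => [|x xs IH] [|c0 c] //=.
  by move=> _ _; rewrite big_ord0 nth_vzero.
move=> [sc] Hs.
have Hs' : forall y, y \in xs -> size y = n.
  by move=> y yxs; apply: Hs; rewrite in_cons yxs orbT.
rewrite /lincomb /= -/(lincomb n c xs) nth_vadd; last first.
  by rewrite size_vscale lincomb_size // Hs ?mem_head.
by rewrite big_ord_recl /= nth_vscale IH.
Qed.

Definition pairs n v := [seq (i, j) | i <- supp n v, j <- [seq j <- supp n v | (i < j)%N]].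
Definition Dv n v : seq ((nat * nat) + nat) :=
  [seq inl ij | ij <- pairs n v] ++ [seq inr k | k <- nsupp n v].
Definition Phi (v t : seq int) (d : (nat * nat) + nat) : rat :=
  match d with
  | inl ij => (t`_ij.1)%:~R / (v`_ij.1)%:~R - (t`_ij.2)%:~R / (v`_ij.2)%:~R
  | inr k => (t`_k)%:~R
  end.

Lemma Lv_Dv n v t : Lv n v t = map (Phi v t) (Dv n v).
Proof. by rewrite /Lv /Dv map_cat -!map_comp. Qed.

Lemma mem_supp n v i : (i \in supp n v) = (i < n)%N && (v`_i != 0).
Proof. by rewrite mem_filter mem_iota andbC. Qed.

Lemma mem_nsupp n v i : (i \in nsupp n v) = (i < n)%N && (v`_i == 0).
Proof. by rewrite mem_filter mem_iota andbC. Qed.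

Lemma Dv_inl n v i j : (inl (i, j) \in Dv n v) =
  [&& i \in supp n v, j \in supp n v & (i < j)%N].
Proof.
rewrite mem_cat; have -> : (inl (i, j) \in [seq inr k | k <- nsupp n v]) = false.
  by apply/negP => /mapP [].
rewrite orbF (mem_map (fun x y (e : inl x = inl y) => let: erefl := e in erefl)).
apply/allpairsPdep/idP.
  case=> i' [j' [Hi Hj [-> ->]]]; move: Hj; rewrite mem_filter => /andP [-> ->].
  by rewrite Hi.
case/and3P => Hi Hj Hij; exists i, j; split => //; by rewrite mem_filter Hij.
Qed.

Lemma Dv_inr n v k : (inr k \in Dv n v) = (k \in nsupp n v).
Proof.
rewrite mem_cat; have -> : (inr k \in [seq inl ij | ij <- pairs n v]) = false.
  by apply/negP => /mapP [].
by rewrite (mem_map (fun x y (e : inr x = inr y) => let: erefl := e in erefl)).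
Qed.

Lemma Dv_cases n v d : d \in Dv n v ->
  (exists i j, d = inl (i, j) /\ [&& i \in supp n v, j \in supp n v & (i < j)%N]) \/
  (exists k, d = inr k /\ k \in nsupp n v).
Proof.
case: d => [[i j]|k] H; [left; exists i, j | right; exists k]; split => //.
  by rewrite -Dv_inl.
by rewrite -Dv_inr.
Qed.

Lemma forall_nth (T : eqType) (x0 : T) (s : seq T) (P : T -> Prop) :
  (forall p, (p < size s)%N -> P (nth x0 s p)) <-> (forall d, d \in s -> P d).
Proof.
split => H.
  by move=> d ds; rewrite -(nth_index x0 ds); apply: H; rewrite index_mem.
by move=> p ps; apply: H; rewrite mem_nth.
Qed.

Lemma exists_argmax (s : seq nat) (f : nat -> int) : s != [::] ->
  exists2 i0, i0 \in s & forall i, i \in s -> f i <= f i0.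
Proof.
elim: s => [|x s IH] // _.
case: (eqVneq s [::]) => [->|sn].
  by exists x; rewrite ?mem_head // => i; rewrite mem_seq1 => /eqP ->.
case: (IH sn) => i0 i0s Hi0.
case: (leP (f x) (f i0)) => H.
  exists i0; first by rewrite in_cons i0s orbT.
  by move=> i; rewrite in_cons => /orP [/eqP ->|/Hi0].
exists x; first by rewrite mem_head.
move=> i; rewrite in_cons => /orP [/eqP ->|/Hi0 h] //; exact: le_trans h (ltW H).
Qed.

Lemma exists_between (s : seq nat) (f g : nat -> int) :
  (forall i j, i \in s -> j \in s -> f i <= g j) ->
  exists c, forall i, i \in s -> f i <= c <= g i.
Proof.
move=> H; case: (eqVneq s [::]) => [->|sn]; first by exists 0.
case: (exists_argmax f sn) => i0 i0s Hi0; exists (f i0) => i Hi.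
by rewrite Hi0 // H.
Qed.

Section Reduce.
Variables (n : nat) (A : seq int -> Prop) (v : seq int).
Hypothesis (sgA : subgroup n A) (Av : A v) (dv : forall w, A w -> vdiv v w).
Variables (a b : nat -> int).

Let lo i := lo_of (a i) (b i) v`_i.
Let hi i := hi_of (a i) (b i) v`_i.
Definition Ap d := match d with inl ij => lo ij.1 - hi ij.2 | inr k => a k end.
Definition Bp d := match d with inl ij => hi ij.1 - lo ij.2 | inr k => b k end.

Let q (t : seq int) i := (t`_i %/ v`_i)%Z.

Lemma qK t i : A t -> v`_i != 0 -> q t i * v`_i = t`_i.
Proof. by move=> At vi; rewrite /q divzK //; apply: dv. Qed.

Lemma Phi_inl t i j : A t -> v`_i != 0 -> v`_j != 0 ->
  Phi v t (inl (i, j)) = (q t i - q t j)%:~R.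
Proof.
move=> At vi vj; rewrite /= -(qK At vi) -(qK At vj) !intrM !mulfK ?intr_eq0 //.
by rewrite intrB.
Qed.

Definition Psi t d := match d with inl ij => q t ij.1 - q t ij.2 | inr k => t`_k end.

Lemma Psi_Phi t d : A t -> d \in Dv n v -> (Psi t d)%:~R = Phi v t d.
Proof.
move=> At /Dv_cases [[i [j [-> /and3P [Hi Hj _]]]]|[k [-> _]]] //.
move: Hi Hj; rewrite !mem_supp => /andP [_ Hi] /andP [_ Hj].
by rewrite Phi_inl.
Qed.

Lemma reduce1 :
  (exists y, A y /\ forall p, (p < n)%N -> a p <= y`_p <= b p) <->
  ((forall i, i \in supp n v -> lo i <= hi i) /\
   exists t, A t /\ forall d, d \in Dv n v -> (Ap d)%:~R <= Phi v t d <= (Bp d)%:~R).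
Proof.
case: sgA => Hs H0 Hadd Hopp.
split.
  case=> y [Ay Hy].
  have Hq : forall i, i \in supp n v -> lo i <= q y i <= hi i.
    move=> i; rewrite mem_supp => /andP [iN vi].
    by rewrite /lo /hi -bnd_char // qK // Hy.
  split; first by move=> i /Hq /andP [h1 h2]; exact: le_trans h2.
  exists y; split => // d /[dup] dD /Dv_cases [[i [j [-> /and3P [Hi Hj _]]]]|[k [-> Hk]]].
    have [vi vj] : v`_i != 0 /\ v`_j != 0.
      by move: Hi Hj; rewrite !mem_supp => /andP [_ ->] /andP [_ ->].
    rewrite Phi_inl // /= !ler_int.
    move: (Hq _ Hi) (Hq _ Hj) => /andP [h1 h2] /andP [h3 h4].
    apply/andP; split; lia.
  rewrite /= !ler_int; apply: Hy; by move: Hk; rewrite mem_nsupp => /andP [].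
case=> Hlh [t [At Ht]].
have Hb : forall i j, i \in supp n v -> j \in supp n v -> lo i - q t i <= hi j - q t j.
  move=> i j Hi Hj.
  have [vi vj] : v`_i != 0 /\ v`_j != 0.
    by move: Hi Hj; rewrite !mem_supp => /andP [_ ->] /andP [_ ->].
  case: (ltngtP i j) => ij.
  - have := Ht (inl (i, j)); rewrite Dv_inl Hi Hj ij Phi_inl // /= !ler_int.
    move=> /(_ isT) /andP [h1 h2]; lia.
  - have := Ht (inl (j, i)); rewrite Dv_inl Hi Hj ij Phi_inl // /= !ler_int.
    move=> /(_ isT) /andP [h1 h2]; lia.
  - subst j; have := Hlh _ Hi; lia.
have [c Hc] := exists_between Hb.
exists (vadd t (vscale c v)); split.
  by apply: Hadd => //; exact: (A_scale sgA Av c).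
move=> p pn.
have sz : size t = size (vscale c v) by rewrite size_vscale !Hs.
rewrite nth_vadd // nth_vscale.
case: (eqVneq v`_p 0) => vp.
  rewrite vp mulr0 addr0.
  have := Ht (inr p); rewrite Dv_inr mem_nsupp pn vp /= !ler_int; by apply.
have Hp : p \in supp n v by rewrite mem_supp pn vp.
have -> : t`_p + c * v`_p = (q t p + c) * v`_p by rewrite mulrDl qK.
rewrite bnd_char // -/(lo p) -/(hi p).
move: (Hc _ Hp) => /andP [h1 h2]; apply/andP; split; lia.
Qed.

Lemma reduce2 :
  (exists t, A t /\ forall d, d \in Dv n v -> (Ap d)%:~R <= Phi v t d <= (Bp d)%:~R) <->
  (exists u, LvImage n v A u /\ forall p, (p < size (Dv n v))%N ->
      Ap (nth (inr 0%N) (Dv n v) p) <= u`_p <= Bp (nth (inr 0%N) (Dv n v) p)).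
Proof.
split.
  case=> t [At Ht]; exists (map (Psi t) (Dv n v)); split.
    exists t; split => //; rewrite Lv_Dv -map_comp; apply/eq_in_map => d dD /=.
    exact: Psi_Phi.
  move=> p ps; rewrite (nth_map (inr 0%N)) // -(ler_int rat) -(ler_int rat (Psi _ _)).
  by rewrite Psi_Phi ?mem_nth //; apply: Ht; rewrite mem_nth.
case=> u [[t [At Hu]] Hb]; exists t; split => //.
apply: (proj1 (@forall_nth _ (inr 0%N) (Dv n v)
  (fun d => (Ap d)%:~R <= Phi v t d <= (Bp d)%:~R))).
move=> p ps.
have su : size u = size (Dv n v) by move: (congr1 size Hu); rewrite Lv_Dv !size_map.
have -> : Phi v t (nth (inr 0%N) (Dv n v) p) = (u`_p)%:~R.
  by rewrite -(nth_map _ 0 (fun z : int => (z%:~R : rat))) ?su // Hu Lv_Dv (nth_map (inr 0%N)).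
by rewrite !ler_int Hb.
Qed.

End Reduce.

Lemma Phi_lincomb n v c xs d : size c = size xs -> (forall x, x \in xs -> size x = n) ->
  Phi v (lincomb n c xs) d = \sum_(m < size xs) (c`_m)%:~R * Phi v (nth [::] xs m) d.
Proof.
move=> sc Hs; case: d => [[i j]|k] /=; rewrite !lincomb_nth // !raddf_sum /=.
  rewrite !mulr_suml -sumrB; apply: eq_bigr => m _; rewrite !intrM; ring.
by apply: eq_bigr => m _; rewrite intrM.
Qed.

Lemma Phi_v n v d : d \in Dv n v -> Phi v v d = 0.
Proof.
case/Dv_cases => [[i [j [-> /and3P [Hi Hj _]]]]|[k [-> Hk]]] /=.
  move: Hi Hj; rewrite !mem_supp => /andP [_ vi] /andP [_ vj].
  by rewrite !divff ?intr_eq0 // subrr.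
by move: Hk; rewrite mem_nsupp => /andP [_ /eqP ->].
Qed.

Lemma vzero_nth_neq n v : size v = n -> v != vzero n -> exists i, (i < n)%N /\ v`_i != 0.
Proof.
move=> sv vn; case: (boolP (has (fun i => v`_i != 0) (iota 0 n))).
  by case/hasP => i; rewrite mem_iota add0n => /andP [_ iN] vi; exists i.
move/hasPn => H; move/negP: vn; case.
apply/eqP/(@eq_from_nth _ 0); first by rewrite size_vzero.
move=> i; rewrite sv => iN; rewrite nth_vzero; apply/eqP.
by move: (H i); rewrite mem_iota add0n iN negbK; apply.
Qed.

Lemma Phi_vzero n v d : Phi v (vzero n) d = 0.
Proof. by case: d => [[i j]|k] /=; rewrite !nth_vzero ?mul0r ?subrr. Qed.

Lemma indep_lift n v L ts us :
  size v = n -> v != vzero n -> size (Dv n v) = L ->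
  size ts = size us ->
  (forall t, t \in ts -> size t = n) -> (forall u, u \in us -> size u = L) ->
  (forall m, (m < size us)%N ->
     [seq (z%:~R : rat) | z <- nth [::] us m] = Lv n v (nth [::] ts m)) ->
  lin_indep L us -> lin_indep n (v :: ts).
Proof.
move=> sv vn sD sts Hts Hus Hmap Hind [|c0 cs] //= [scs] H.
have xsS : forall x, x \in v :: ts -> size x = n.
  by move=> x; rewrite in_cons => /orP [/eqP ->|/Hts].
have Hcs0 : forall p, (p < L)%N -> \sum_(m < size us) cs`_m * (nth [::] us m)`_p = 0.
  move=> p pL; set d := nth (inr 0%N) (Dv n v) p.
  have dD : d \in Dv n v by rewrite mem_nth // sD.
  have := congr1 (fun w => Phi v w d) H; rewrite /= Phi_lincomb /= ?scs //.
  rewrite Phi_vzero big_ord_recl /= (Phi_v dD) mulr0 add0r.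
  rewrite sts => E; apply/eqP; rewrite -(intr_eq0 rat) -E raddf_sum /=.
  apply/eqP; apply: eq_bigr => m _; rewrite intrM; congr (_ * _).
  have mu : (m < size us)%N by [].
  have := congr1 (fun s => nth 0 s p) (Hmap m mu).
  rewrite (nth_map 0) ?Hus ?mem_nth // Lv_Dv (nth_map (inr 0%N)) ?sD //.
have Hlc : lincomb L cs us = vzero L.
  apply: (@eq_from_nth _ 0); first by rewrite lincomb_size ?size_vzero // scs.
  move=> p; rewrite lincomb_size ?scs // => pL.
  by rewrite lincomb_nth ?scs // nth_vzero Hcs0.
have Hcs := Hind cs (etrans scs sts) Hlc.
have [i [iN vi]] := vzero_nth_neq sv vn.
have := congr1 (fun s => nth 0 s i) H; rewrite /= lincomb_nth /= ?scs //.
rewrite nth_vzero big_ord_recl /= big1 ?addr0; last first.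
  by move=> m _; rewrite Hcs nth_nseq if_same mul0r.
move/eqP; rewrite mulf_eq0 (negbTE vi) orbF => /eqP ->.
by rewrite {1}Hcs scs.
Qed.

Lemma preimages n v A us :
  (forall u, List.In u us -> LvImage n v A u) ->
  exists ts, size ts = size us /\ (forall t, List.In t ts -> A t) /\
    forall m, (m < size us)%N ->
     [seq (z%:~R : rat) | z <- nth [::] us m] = Lv n v (nth [::] ts m).
Proof.
elim: us => [|u us IH] H; first by exists [::].
have [t [At Ht]] := H u (or_introl erefl).
have [ts [sts [Hts Hm]]] := IH (fun u' h => H u' (or_intror h)).
exists (t :: ts); split; first by rewrite /= sts.
split; first by move=> t' /= [<-|/Hts].
by case=> [|m] //= mu; apply: Hm.
Qed.

Lemma Ap_inl v a b i k : Ap v a b (inl (i, k)) = lo_of (a i) (b i) v`_i - hi_of (a k) (b k) v`_k.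
Proof. by []. Qed.
Lemma Bp_inl v a b i k : Bp v a b (inl (i, k)) = hi_of (a i) (b i) v`_i - lo_of (a k) (b k) v`_k.
Proof. by []. Qed.
Lemma Ap_inr v a b k : Ap v a b (inr k) = a k.
Proof. by []. Qed.
Lemma Bp_inr v a b k : Bp v a b (inr k) = b k.
Proof. by []. Qed.

Definition lof (v : seq int) (al be : nat -> seq int -> int) i x :=
  lo_of (al i x) (be i x) v`_i.
Definition hif (v : seq int) (al be : nat -> seq int -> int) i x :=
  hi_of (al i x) (be i x) v`_i.
Definition Pf v al be i j x := hif v al be j x - lof v al be i x.
Lemma Pf_eq v al be i k x :
  Pf v al be i k x = hi_of (al k x) (be k x) v`_k - lo_of (al i x) (be i x) v`_i.
Proof. by []. Qed.

Lemma SML_lift N j f : SML N j f -> SML N j.+1 f.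
Proof. by case=> H; [left|right]; apply: ML_lift. Qed.

Lemma SML_if N j (b : bool) f g : SML N j f -> SML N j g ->
  SML N j (fun x => if b then f x else g x).
Proof. by case: b. Qed.

Lemma ML_Pf N j n v al be i k :
  (forall p, (p < n)%N -> SML N j (al p) /\ SML N j (be p)) ->
  i \in supp n v -> k \in supp n v -> ML N j.+1 (Pf v al be i k).
Proof.
move=> Hab; rewrite !mem_supp => /andP [iN vi] /andP [kN vk].
have [Ha Hb] := Hab _ iN; have [Ha' Hb'] := Hab _ kN.
rewrite /Pf /hif /lof /hi_of /lo_of.
apply: (@ML_stepS N j (fun x => if 0 < v`_k then be k x else al k x)
            (fun x => if 0 < v`_i then al i x else be i x)) => //; exact: SML_if.
Qed.

Lemma SML_ApBp N j n v al be d :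
  (forall p, (p < n)%N -> SML N j (al p) /\ SML N j (be p)) ->
  d \in Dv n v ->
  SML N j.+1 (fun x => Ap v (al^~ x) (be^~ x) d) /\
  SML N j.+1 (fun x => Bp v (al^~ x) (be^~ x) d).
Proof.
move=> Hab /Dv_cases [[i [k [-> /and3P [Hi Hk _]]]]|[k [-> Hk]]].
  split.
    case: (SML_opp (SML_ML (ML_Pf Hab Hi Hk))) => Hm; [left|right];
      apply: ML_ext Hm _ => x; rewrite Ap_inl Pf_eq ?opprB //.
  by rewrite /SML; left; apply: ML_ext (ML_Pf Hab Hk Hi) _ => x; rewrite Bp_inl Pf_eq.
move: Hk; rewrite mem_nsupp => /andP [kN _]; have [Ha Hb] := Hab _ kN.
by split; apply: SML_lift.
Qed.

Lemma In_map (T : eqType) (U : Type) (f : T -> U) s l :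
  List.In l (map f s) <-> exists i, i \in s /\ l = f i.
Proof.
elim: s => [|y s IH] /=; first by split => // [[i []]].
split.
  case=> [<-|/IH [i [Hi ->]]]; first by exists y; rewrite mem_head.
  by exists i; rewrite in_cons Hi orbT.
case=> i []; rewrite in_cons => /orP [/eqP -> ->|Hi El]; first by left.
by right; apply/IH; exists i.
Qed.

Lemma In_map_app (T : eqType) (U : Type) (f : T -> U) s E (P : U -> Prop) :
  (forall l, List.In l ([seq f i | i <- s] ++ E) -> P l) <->
  (forall i, i \in s -> P (f i)) /\ (forall l, List.In l E -> P l).
Proof.
split.
  move=> H; split.
    by move=> i Hi; apply: H; apply: List.in_or_app; left; apply/In_map; exists i.
  by move=> l Hl; apply: H; apply: List.in_or_app; right.
case=> H1 H2 l Hl; case: (List.in_app_or _ _ _ Hl) => Hl'; last exact: H2.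
by case/In_map: Hl' => i [Hi ->]; apply: H1.
Qed.

Definition Claim n (A : seq int -> Prop) :=
  exists d, (0 < d)%N /\
   (exists xs, size xs = d /\ (forall x, List.In x xs -> A x) /\ lin_indep n xs) /\
   forall N j (al be : nat -> seq int -> int),
     (forall p, (p < n)%N -> SML N j (al p) /\ SML N j (be p)) ->
     exists E : seq (seq int -> int),
       (forall l, List.In l E -> ML N (d + j) l) /\
       forall x, (exists y, A y /\ forall p, (p < n)%N -> al p x <= y`_p <= be p x)
                 <-> (forall l, List.In l E -> 0 <= l x).

Lemma classE_subgroup n A : classE n A -> subgroup n A.
Proof. by case. Qed.

Lemma size_Dv n v A L : LvImage n v A (vzero L) -> size (Dv n v) = L.
Proof.
case=> t [_ H]; move: (congr1 size H); rewrite Lv_Dv !size_map size_vzero.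
by move=> ->.
Qed.

Lemma reduce_all n A v al be x :
  subgroup n A -> A v -> (forall w, A w -> vdiv v w) ->
  (exists y, A y /\ forall p, (p < n)%N -> al p x <= y`_p <= be p x) <->
  ((forall i, i \in supp n v -> 0 <= Pf v al be i i x) /\
   exists u, LvImage n v A u /\ forall p, (p < size (Dv n v))%N ->
      Ap v (al^~ x) (be^~ x) (nth (inr 0%N) (Dv n v) p) <= u`_p <=
      Bp v (al^~ x) (be^~ x) (nth (inr 0%N) (Dv n v) p)).
Proof.
move=> sg Av dv.
rewrite (reduce1 sg Av dv (al^~ x) (be^~ x)) -(reduce2 n dv (al^~ x) (be^~ x)).
split; case=> H1 H2; split => // i Hi; have := H1 i Hi; by rewrite /Pf subr_ge0.
Qed.

Lemma claim_case2 n A v :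
  subgroup n A -> A v -> v != vzero n -> (forall w, A w -> vdiv v w) ->
  classE (Ldim n v) (LvImage n v A) -> Claim (Ldim n v) (LvImage n v A) -> Claim n A.
Proof.
move=> sg Av vn dv HB [d' [d'0 [[us [sus [Hus Hind]]] F]]].
have sgB := classE_subgroup HB.
have sD : size (Dv n v) = Ldim n v by case: sgB => _ H0 _ _; exact: size_Dv H0.
case: (sg) => Hs _ _ _.
exists d'.+1; split => //; split.
  have [ts [sts [Hts Hmap]]] := preimages Hus.
  exists (v :: ts); split; first by rewrite /= sts sus.
  split; first by move=> x /= [<-|/Hts].
  apply: (indep_lift (Hs _ Av) vn sD sts) => //.
    by move=> t /InP /Hts /Hs.
  by move=> u /InP /Hus; case: sgB => HsB _ _ _ /HsB.
move=> N j al be Hab.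
have HabB : forall p, (p < Ldim n v)%N ->
   SML N j.+1 (fun x => Ap v (al^~ x) (be^~ x) (nth (inr 0%N) (Dv n v) p)) /\
   SML N j.+1 (fun x => Bp v (al^~ x) (be^~ x) (nth (inr 0%N) (Dv n v) p)).
  by move=> p pL; apply: SML_ApBp Hab _; rewrite mem_nth // sD.
have [EB [HEB1 HEB2]] := F N j.+1 _ _ HabB.
exists ([seq Pf v al be i i | i <- supp n v] ++ EB); split.
  apply/In_map_app; split.
    by move=> i Hi; apply: (ML_mono _ (ML_Pf Hab Hi Hi)); rewrite addSn ltnS leq_addl.
  by move=> l /HEB1; rewrite addnS addSn.
move=> x; rewrite (@reduce_all n A v al be x sg Av dv) sD.
rewrite (In_map_app (fun i => Pf v al be i i) (supp n v) EB (fun l => 0 <= l x)).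
by rewrite -HEB2.
Qed.

Definition K1 (al : nat -> seq int -> int) k x := fl (- al k x) 1 - cl (- al k x) 2.
Definition K2 (be : nat -> seq int -> int) k x := fl (be k x) 1 - cl (be k x) 2.

Lemma claim_case1 n A v :
  subgroup n A -> A v -> v != vzero n -> (forall w, A w -> vdiv v w) ->
  (forall u, LvImage n v A u <-> u = vzero (Ldim n v)) -> Claim n A.
Proof.
move=> sg Av vn dv H1.
have sD : size (Dv n v) = Ldim n v by apply: size_Dv; apply/H1.
case: (sg) => Hs _ _ _.
exists 1%N; split => //; split.
  exists [:: v]; split => //; split; first by move=> x /= [<-|[]].
  apply: (@indep_lift n v (Ldim n v) [::] [::] (Hs _ Av) vn sD) => //.
  by case.
move=> N j al be Hab.
exists ([seq Pf v al be ij.1 ij.2 | ij <- [seq (i, k) | i <- supp n v, k <- supp n v]]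
        ++ ([seq K1 al k | k <- nsupp n v] ++ ([seq K2 be k | k <- nsupp n v] ++ [::]))).
split.
  apply/In_map_app; split.
    move=> ij /allpairsPdep [i [k [Hi Hk ->]]] /=; rewrite add1n.
    exact: ML_Pf Hab Hi Hk.
  apply/In_map_app; split.
    move=> k; rewrite mem_nsupp => /andP [kN _]; have [Ha _] := Hab _ kN.
    by rewrite add1n; apply: ML_stepS => //; apply: SML_opp.
  apply/In_map_app; split => //.
  move=> k; rewrite mem_nsupp => /andP [kN _]; have [_ Hb] := Hab _ kN.
  by rewrite add1n; apply: ML_stepS.
move=> x; rewrite (@reduce_all n A v al be x sg Av dv) sD.
rewrite (In_map_app (fun ij => Pf v al be ij.1 ij.2) _ _ (fun l => 0 <= l x)).
rewrite (In_map_app (fun k => K1 al k) _ _ (fun l => 0 <= l x)).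
rewrite (In_map_app (fun k => K2 be k) _ _ (fun l => 0 <= l x)).
have HK1 : forall k, (0 <= K1 al k x) = (al k x <= 0).
  by move=> k; rewrite /K1 sign_trick oppr_ge0.
have HK2 : forall k, (0 <= K2 be k x) = (0 <= be k x).
  by move=> k; rewrite /K2 sign_trick.
split.
  case=> Hii [u [/H1 -> Hbox]].
  have Hd := proj1 (@forall_nth _ (inr 0%N) (Dv n v)
     (fun d => Ap v (al^~ x) (be^~ x) d <= 0 <= Bp v (al^~ x) (be^~ x) d)).
  have {}Hd : forall d, d \in Dv n v ->
      Ap v (al^~ x) (be^~ x) d <= 0 <= Bp v (al^~ x) (be^~ x) d.
    by apply: Hd => p pL; have := Hbox p; rewrite nth_vzero -sD; apply.
  split.
    move=> ij /allpairsPdep [i [k [Hi Hk ->]]] /=.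
    case: (ltngtP i k) => ik.
    - have := Hd (inl (i, k)); rewrite Dv_inl Hi Hk ik Ap_inl Pf_eq => /(_ isT).
      move=> /andP [h1 h2]; lia.
    - have := Hd (inl (k, i)); rewrite Dv_inl Hi Hk ik Bp_inl Pf_eq => /(_ isT).
      move=> /andP [h1 h2]; lia.
    - by subst k; apply: Hii.
  split.
    move=> k Hk; rewrite HK1; have := Hd (inr k); rewrite Dv_inr Hk Ap_inr.
    by move=> /(_ isT) /andP [].
  split => //.
  move=> k Hk; rewrite HK2; have := Hd (inr k); rewrite Dv_inr Hk Bp_inr.
  by move=> /(_ isT) /andP [].
case=> HP [HQ1 [HQ2 _]]; split.
  by move=> i Hi; apply: (HP (i, i)); apply/allpairsPdep; exists i, i.
exists (vzero (Ldim n v)); split; first exact/H1.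
have Hd : forall d, d \in Dv n v ->
    Ap v (al^~ x) (be^~ x) d <= 0 <= Bp v (al^~ x) (be^~ x) d.
  move=> d.
  case/Dv_cases => [[i [k [-> /and3P [Hi Hk _]]]]|[k [-> Hk]]].
    have h1 := HP (i, k); have h2 := HP (k, i).
    have {h1} h1 : 0 <= Pf v al be i k x by apply: h1; apply/allpairsPdep; exists i, k.
    have {h2} h2 : 0 <= Pf v al be k i x by apply: h2; apply/allpairsPdep; exists k, i.
    rewrite Ap_inl Bp_inl; rewrite !Pf_eq in h1 h2; apply/andP; split; lia.
  rewrite Ap_inr Bp_inr; have := HQ1 k Hk; have := HQ2 k Hk.
  by rewrite HK1 HK2 => -> ->.
move=> p pL; rewrite nth_vzero.
apply: (proj2 (@forall_nth _ (inr 0%N) (Dv n v)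
     (fun d => Ap v (al^~ x) (be^~ x) d <= 0 <= Bp v (al^~ x) (be^~ x) d)) Hd).
by rewrite sD.
Qed.

Fixpoint classE_claim n A (H : classE n A) {struct H} : Claim n A :=
  match H with
  | classE_intro n A v sg Av vn dv Hor =>
      match Hor with
      | or_introl h1 => @claim_case1 n A v sg Av vn dv h1
      | or_intror h2 => @claim_case2 n A v sg Av vn dv h2 (classE_claim h2)
      end
  end.

Lemma to_modlin N r (E : seq (seq int -> int)) :
  (forall l, List.In l E -> ML N r l) ->
  exists E', (forall l, List.In l E' -> modlin N r l) /\
    forall x, (forall l, List.In l E' -> 0 <= l x) <-> (forall l, List.In l E -> 0 <= l x).
Proof.
elim: E => [|l E IH] H; first by exists [::].
have [c [c0 Hc]] := ML_modlin (H l (or_introl erefl)).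
have [E' [HE'1 HE'2]] := IH (fun l' h => H l' (or_intror h)).
exists ((fun x => c * l x) :: E'); split.
  by move=> l' /= [<-|/HE'1].
move=> x; split.
  move=> Hx l' /= [<-|Hl'].
    by have := Hx _ (or_introl erefl); rewrite pmulr_rge0.
  by apply: (proj1 (HE'2 x)) => // l'' h; apply: Hx; right.
move=> Hx l' /= [<-|Hl'].
  by rewrite pmulr_rge0 //; apply: Hx; left.
by apply: (proj2 (HE'2 x)) => // l'' h; apply: Hx; right.
Qed.

Lemma interleave_cons (x y : int) a b :
  interleave (x :: a) (y :: b) = x :: y :: interleave a b.
Proof. by []. Qed.

Lemma nth_interleave (a b : seq int) p : (p < minn (size a) (size b))%N ->
  (interleave a b)`_(2 * p) = a`_p /\ (interleave a b)`_(2 * p).+1 = b`_p.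
Proof.
elim: a b p => [|x a IH] [|y b] [|p] // H.
have {}H : (p < minn (size a) (size b))%N by move: H; rewrite /= minnSS.
rewrite interleave_cons (_ : (2 * p.+1 = (2 * p).+2)%N); last by lia.
exact: IH H.
Qed.

Unset Implicit Arguments.
Theorem mainTheorem1 (n r : nat) (A : seq int -> Prop) :
  (1 <= n)%N -> classE n A -> grank n A r ->
  exists E : seq (seq int -> int),
    (forall l, List.In l E -> modlin (2 * n)%N r l) /\
    forall a b : seq int, size a = n -> size b = n ->
      (forall i : nat, (i < n)%N -> a`_i <= b`_i) ->
      ((exists x, A x /\ forall i : nat, (i < n)%N -> a`_i <= x`_i <= b`_i)
       <-> (forall l, List.In l E -> 0 <= l (interleave a b))).
Proof.
move=> n1 HE [_ Hmax].
have [d [d0 [[xs [sxs [Hxs Hind]]] F]]] := classE_claim HE.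
have dr : (d <= r)%N by rewrite -sxs; apply: Hmax.
have Hab : forall p, (p < n)%N -> SML (2 * n)%N 0%N (fun x => x`_(2 * p)) /\
                                  SML (2 * n)%N 0%N (fun x => x`_(2 * p).+1).
  by move=> p pn; split; apply: SML_ML; apply: ML_proj; lia.
have [E [HE1 HE2]] := F (2 * n)%N 0%N (fun p x => x`_(2 * p)) (fun p x => x`_(2 * p).+1) Hab.
have dr' : (d + 0 <= r)%N by rewrite addn0.
have [E' [HE'1 HE'2]] := @to_modlin (2 * n)%N r E
   (fun l h => ML_mono dr' (HE1 l h)).
exists E'; split => // a b sa sb _.
rewrite HE'2 -HE2.
have Hi : forall p, (p < n)%N ->
    (interleave a b)`_(2 * p) = a`_p /\ (interleave a b)`_(2 * p).+1 = b`_p.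
  by move=> p pn; apply: nth_interleave; rewrite sa sb minnn.
split; case=> y [Ay Hy]; exists y; split => // p pn; have [e1 e2] := Hi p pn.
  by rewrite /= e1 e2; apply: Hy.
by rewrite -e1 -e2; apply: Hy.
Qed.
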